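(* Let $A$ be a nonempty set of positive integers and let $n$ be a positive integer. Then (a) $\displaystyle nN^p_A(n)=\sum_{k=1}^{n-1}N^p_A(k)\sigma_A(n-k)+\sum_{t=1}^{n}t\,\tau_A(t)\,p_A(n-t)$; (b) $\displaystyle nN^q_A(n)=\sum_{k=1}^{n-1}N^q_A(k)\sigma^s_A(n-k)+\sum_{t=1}^{n}t\,\tau^s_A(t)\,q_A(n-t)$.
   Context: For a set $A$ of positive integers: $N^p_A(n)$ (resp. $N^q_A(n)$) is the total number of parts, summed over all partitions (resp. partitions into pairwise distinct parts) of $n$ with parts in $A$; $p_A(m)$ (resp. $q_A(m)$) is the number of partitions (resp. partitions into distinct parts) of $m$ with parts in $A$, with $p_A(0)=q_A(0)=1$. $\tau_A(n)=\sum_{a\in A,\,a\mid n}1$, $\tau^s_A(n)=\sum_{a\in A,\,a\mid n}(-1)^{n/a-1}$, $\sigma_A(n)=\sum_{a\in A,\,a\mid n}a$, $\sigma^s_A(n)=\sum_{a\in A,\,a\mid n}(-1)^{n/a-1}a$. *)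

(* Defs.v *)
From mathcomp Require Import all_boot all_order all_algebra.
Set Implicit Arguments. Unset Strict Implicit. Unset Printing Implicit Defensive.
Import GRing.Theory Num.Theory.

(* A partition of m (with parts <= m) is encoded by its multiplicity function
   f : 'I_m -> 'I_m.+1, where f i is the multiplicity of the part i.+1. *)

Definition mults (m : nat) := {ffun 'I_m -> 'I_m.+1}.

Definition is_partA (A : pred nat) {m : nat} (f : mults m) : bool :=
  ((\sum_(i < m) i.+1 * f i)%N == m) && [forall i, (0 < f i)%N ==> A i.+1].

Definition is_dpartA (A : pred nat) {m : nat} (f : mults m) : bool :=
  is_partA A f && [forall i, (f i <= 1)%N].

Definition nparts {m : nat} (f : mults m) : nat := (\sum_(i < m) f i)%N.

Definition pA (A : pred nat) (m : nat) : nat := #|[set f : mults m | is_partA A f]|.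
Definition qA (A : pred nat) (m : nat) : nat := #|[set f : mults m | is_dpartA A f]|.

Definition NpA (A : pred nat) (n : nat) : nat :=
  (\sum_(f : mults n | is_partA A f) nparts f)%N.
Definition NqA (A : pred nat) (n : nat) : nat :=
  (\sum_(f : mults n | is_dpartA A f) nparts f)%N.

(* divisor functions restricted to A (divisors of n lie in [1, n] for n > 0) *)
Definition tauA (A : pred nat) (n : nat) : nat :=
  (\sum_(1 <= a < n.+1 | A a && (dvdn a n)) 1)%N.
Definition sigmaA (A : pred nat) (n : nat) : nat :=
  (\sum_(1 <= a < n.+1 | A a && (dvdn a n)) a)%N.
Definition tausA (A : pred nat) (n : nat) : int :=
  (\sum_(1 <= a < n.+1 | A a && (dvdn a n)) (-1) ^+ (n %/ a).-1)%R.
Definition sigmasA (A : pred nat) (n : nat) : int :=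
  (\sum_(1 <= a < n.+1 | A a && (dvdn a n)) (-1) ^+ (n %/ a).-1 * a%:Z)%R.

(* Main.v *)
Require Import Defs.
From mathcomp Require Import all_boot all_order all_algebra ring zify.
Import GRing.Theory Num.Theory.
Set Implicit Arguments. Unset Strict Implicit. Unset Printing Implicit Defensive.

Local Close Scope ring_scope.

Definition vf {k} (f : mults k) (x : nat) : nat :=
  if (insub x : option 'I_k) is Some i then val (f i) else 0.

Lemma vf_ord k (f : mults k) (i : 'I_k) : vf f i = f i.
Proof. by rewrite /vf valK. Qed.

Lemma vf_out k (f : mults k) x : (k <= x)%N -> vf f x = 0.
Proof. by move=> h; rewrite /vf insubN // -leqNgt. Qed.

Lemma vf_le k (f : mults k) x : (vf f x <= k)%N.
Proof. rewrite /vf; case: insubP => // i _ _; by rewrite -ltnS ltn_ord. Qed.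

Lemma eq_vf k (f g : mults k) : vf f =1 vf g -> f = g.
Proof. by move=> h; apply/ffunP => i; apply/val_inj; have := h i; rewrite !vf_ord. Qed.

Definition conv {k l} (f : mults k) : mults l := [ffun i : 'I_l => inord (vf f i)].

Lemma vf_conv k l (f : mults k) : (forall x, vf f x <= l)%N ->
  (forall x, l <= x -> vf f x = 0)%N -> vf (conv f : mults l) =1 vf f.
Proof.
move=> h1 h2 x; case: (ltnP x l) => hx.
  by rewrite -[x]/(val (Ordinal hx)) vf_ord ffunE inordK // ltnS.
by rewrite vf_out // h2.
Qed.

Lemma sum_vf k K (f : mults k) (phi : nat -> nat -> nat) : (k <= K)%N ->
  (forall x, phi x 0 = 0) ->
  (\sum_(i < k) phi i (f i) = \sum_(i < K) phi i (vf f i))%N.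
Proof.
move=> hk h0.
rewrite (eq_bigr (fun i : 'I_k => phi i (vf f i))); last by move=> i _; rewrite vf_ord.
rewrite (@big_ord_widen _ _ _ k K (fun i => phi i (vf f i))) // big_mkcond /=.
apply: eq_bigr => i _; case: ifP => // /negbT; rewrite -leqNgt => h.
by rewrite vf_out.
Qed.

Definition wt {k} (f : mults k) := (\sum_(i < k) i.+1 * f i)%N.
Definition okA (A : pred nat) {k} (f : mults k) := [forall i, (0 < f i)%N ==> A i.+1].
Definition distb {k} (f : mults k) := [forall i, (f i <= 1)%N].
Definition partk (A : pred nat) {k} (m : nat) (f : mults k) := (wt f == m) && okA A f.

Lemma wt_vf k K (f : mults k) : (k <= K)%N -> wt f = (\sum_(i < K) i.+1 * vf f i)%N.
Proof. by move=> h; rewrite /wt (@sum_vf _ K f (fun x y => x.+1 * y)%N) // => x; rewrite muln0. Qed.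

Lemma np_vf k K (f : mults k) : (k <= K)%N -> nparts f = (\sum_(i < K) vf f i)%N.
Proof. by move=> h; rewrite /nparts (@sum_vf _ K f (fun x y => y)%N). Qed.

Lemma wt_ge k (f : mults k) (i : 'I_k) : (i.+1 * f i <= wt f)%N.
Proof. by rewrite /wt (bigD1 i) //= leq_addr. Qed.

Lemma vf_wt k (f : mults k) x : (x.+1 * vf f x <= wt f)%N.
Proof.
case: (ltnP x k) => hx; last by rewrite vf_out // muln0.
by rewrite -[x]/(val (Ordinal hx)) vf_ord wt_ge.
Qed.

Lemma np_le_wt k (f : mults k) : (nparts f <= wt f)%N.
Proof. by apply: leq_sum => i _; rewrite leq_pmull. Qed.

Lemma okAP (A : pred nat) k (f : mults k) : reflect (forall x, 0 < vf f x -> A x.+1)%N (okA A f).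
Proof.
apply: (iffP forallP) => H.
  move=> x; case: (ltnP x k) => hx; last by rewrite vf_out.
  by rewrite -[x]/(val (Ordinal hx)) vf_ord => h; have := H (Ordinal hx); rewrite h.
by move=> i; apply/implyP; rewrite -vf_ord; apply: H.
Qed.

Lemma distbP k (f : mults k) : reflect (forall x, vf f x <= 1)%N (distb f).
Proof.
apply: (iffP forallP) => H.
  move=> x; case: (ltnP x k) => hx; last by rewrite vf_out.
  by rewrite -[x]/(val (Ordinal hx)) vf_ord.
by move=> i; rewrite -vf_ord.
Qed.

Lemma transfer (A : pred nat) m n (b : bool) (F : nat -> nat) : (m <= n)%N ->
  (\sum_(g : mults m | is_partA A g && (b ==> distb g)) F (nparts g) =
   \sum_(f : mults n | partk A m f && (b ==> distb f)) F (nparts f))%N.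
Proof.
move=> hmn; symmetry.
rewrite (reindex_onto (@conv m n) (@conv n m)).
  apply: eq_big.
    move=> g; have hv : vf (conv g : mults n) =1 vf g.
      apply: vf_conv => x; first exact: leq_trans (vf_le g x) hmn.
      by move=> hx; apply: vf_out; apply: leq_trans hmn hx.
    have hv2 : conv (conv g : mults n) = g.
      apply: eq_vf => x; rewrite vf_conv ?hv //.
        by move=> y; rewrite hv vf_le.
      by move=> y hy; rewrite hv vf_out.
    rewrite hv2 eqxx andbT /partk /is_partA (wt_vf (conv g : mults n) (leqnn n)).
    rewrite (eq_bigr (fun i : 'I_n => i.+1 * vf g i)%N); last by move=> i _; rewrite hv.
    rewrite -(wt_vf g hmn) /wt.
    have -> : okA A (conv g : mults n) = okA A g.
      by apply/okAP/okAP => H x; [rewrite -hv | rewrite hv]; apply: H.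
    have -> : distb (conv g : mults n) = distb g.
      by apply/distbP/distbP => H x; [rewrite -hv | rewrite hv]; apply: H.
    by [].
  move=> g _; congr F.
  have hv : vf (conv g : mults n) =1 vf g.
    apply: vf_conv => x; first exact: leq_trans (vf_le g x) hmn.
    by move=> hx; apply: vf_out; apply: leq_trans hmn hx.
  rewrite (np_vf (conv g : mults n) (leqnn n)) (np_vf g hmn).
  by apply: eq_bigr => i _; rewrite hv.
move=> f /andP[/andP[/eqP hw _] _].
have b1 : forall x, (vf f x <= m)%N.
  move=> x; rewrite -hw; apply: leq_trans (vf_wt f x); exact: leq_pmull.
have b2 : forall x, (m <= x)%N -> vf f x = 0.
  move=> x hx; have := vf_wt f x; rewrite hw; case: (vf f x) => // c.
  rewrite mulnS => h; exfalso; move: h; rewrite leqNgt; move/negP; apply.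
  by rewrite ltnS; apply: leq_trans hx (leq_addr _ _).
have hv : vf (conv f : mults m) =1 vf f by apply: vf_conv.
apply: eq_vf => x; rewrite vf_conv ?hv //.
  by move=> y; rewrite hv; apply: leq_trans (b1 y) hmn.
by move=> y hy; rewrite hv b2 //; apply: leq_trans hmn hy.
Qed.

Local Close Scope ring_scope.

Definition addj {n} (j : nat) (i : 'I_n) (g : mults n) : mults n :=
  [ffun x => if x == i then inord (g x + j) else g x].
Definition subj {n} (j : nat) (i : 'I_n) (g : mults n) : mults n :=
  [ffun x => if x == i then inord (g x - j) else g x].

Lemma okA_upd (A : pred nat) n (i : 'I_n) (f g : mults n) :
  (forall x, x != i -> f x = g x) -> A i.+1 -> okA A f = okA A g.
Proof.
move=> h hA; apply/forallP/forallP => H x; case: (eqVneq x i) => [->|hx];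
  rewrite ?hA ?implybT // ?(h x hx) // -(h x hx); exact: H.
Qed.

Lemma wt_upd n (i : 'I_n) (f g : mults n) c :
  (forall x, x != i -> f x = g x) -> val (f i) = g i + c ->
  wt f = wt g + i.+1 * c.
Proof.
move=> h hi; rewrite /wt (bigD1 i) //= [in RHS](bigD1 i) //= hi.
rewrite (eq_bigr (fun x : 'I_n => x.+1 * g x)); last by move=> x /h ->.
by rewrite mulnDr addnAC.
Qed.

Lemma np_upd n (i : 'I_n) (f g : mults n) c :
  (forall x, x != i -> f x = g x) -> val (f i) = g i + c ->
  nparts f = nparts g + c.
Proof.
move=> h hi; rewrite /nparts (bigD1 i) //= [in RHS](bigD1 i) //= hi.
rewrite (eq_bigr (fun x : 'I_n => val (g x))); last by move=> x /h ->.
by rewrite addnAC.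
Qed.

Lemma addj_off n j (i : 'I_n) (g : mults n) x : x != i -> addj j i g x = g x.
Proof. by move=> h; rewrite ffunE (negbTE h). Qed.
Lemma subj_off n j (i : 'I_n) (g : mults n) x : x != i -> subj j i g x = g x.
Proof. by move=> h; rewrite ffunE (negbTE h). Qed.
Lemma addj_on n j (i : 'I_n) (g : mults n) : (g i + j <= n)%N -> val (addj j i g i) = g i + j.
Proof. by move=> h; rewrite ffunE eqxx /= inordK. Qed.
Lemma subj_on n j (i : 'I_n) (g : mults n) : val (subj j i g i) = g i - j.
Proof.
rewrite ffunE eqxx /= inordK //; apply: leq_ltn_trans (leq_subr _ _) _; exact: ltn_ord.
Qed.

Lemma addj_subj n j (i : 'I_n) (f : mults n) : (j <= f i)%N -> addj j i (subj j i f) = f.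
Proof.
move=> hj; apply/ffunP => x; case: (eqVneq x i) => [->|hx]; last by rewrite addj_off ?subj_off.
apply/val_inj; rewrite addj_on subj_on ?subnK //.
by rewrite -ltnS ltn_ord.
Qed.

Lemma shift (A : pred nat) n (i : 'I_n) j k m (Q : pred (mults n)) (F : mults n -> nat) :
  A i.+1 -> k + i.+1 * j = m -> (m <= n)%N ->
  (\sum_(g | partk A k g && Q (addj j i g)) F (addj j i g) =
  \sum_(f | partk A m f && (j <= f i) && Q f) F f)%N.
Proof.
move=> hA hm hmn.
have hjn : (j <= n)%N by apply: leq_trans hmn; rewrite -hm; apply: leq_trans (leq_addl _ _); apply: leq_pmull.
rewrite (reindex_onto (subj j i) (addj j i)); last first.
  move=> g /andP[/andP[/eqP hw _] _].
  have hg : (g i + j <= n)%N.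
    apply: leq_trans hmn; rewrite -hm -hw leq_add //.
      by apply: leq_trans (wt_ge g i); apply: leq_pmull.
    by apply: leq_pmull.
  apply/ffunP => x; case: (eqVneq x i) => [->|hx]; last by rewrite !subj_off ?addj_off.
  by apply/val_inj; rewrite subj_on addj_on // addnK.
symmetry; apply: eq_big.
  move=> f; case: (leqP j (f i)) => hj.
    have e := addj_subj hj.
    rewrite e eqxx !andbT /partk.
    have -> : wt f = wt (subj j i f) + i.+1 * j.
      apply: wt_upd; first by move=> x hx; rewrite subj_off.
      by rewrite subj_on subnK.
    rewrite -hm eqn_add2r.
    by rewrite (@okA_upd A n i (subj j i f) f) // => x hx; rewrite subj_off.
  rewrite andbF /=; symmetry; apply/negbTE/negP => /andP[_ /eqP e].
  have h0 : f i - j = 0 by apply/eqP; rewrite subn_eq0 ltnW.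
  have := congr1 (fun h : mults n => val (h i)) e => /=.
  rewrite addj_on; last by rewrite subj_on h0.
  rewrite subj_on h0 add0n => ej.
  by move: hj; rewrite -ej ltnn.
by move=> f /andP[/andP[_ hj] _]; rewrite addj_subj.
Qed.

Local Close Scope ring_scope.

Lemma sum_ind_min c x N :
  (\sum_(1 <= j < N.+1) (if j <= c then x else 0) = minn c N * x)%N.
Proof.
elim: N => [|N IH]; first by rewrite big_geq // minn0.
rewrite big_nat_recr //= IH; case: (leqP N.+1 c) => h.
  by rewrite (minn_idPr (ltnW h)) mulSn addnC.
by rewrite (minn_idPl _) ?addn0 // -ltnS.
Qed.

Lemma mul_count c x N : (c <= N)%N ->
  (c * x = \sum_(1 <= j < N.+1) (if j <= c then x else 0))%N.
Proof. by move=> h; rewrite sum_ind_min (minn_idPl h). Qed.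

Lemma nN n (C : pred (mults n)) : (forall f, C f -> wt f = n) ->
  (n * \sum_(f | C f) nparts f = \sum_(i < n) i.+1 * \sum_(f | C f) f i * nparts f)%N.
Proof.
move=> hC; rewrite big_distrr /=.
rewrite (eq_bigr (fun i : 'I_n => \sum_(f | C f) i.+1 * (f i * nparts f)))%N;
  last by move=> i _; rewrite big_distrr.
rewrite [in RHS](exchange_big); apply: eq_bigr => f /hC hw.
have -> : (n * nparts f = wt f * nparts f)%N by rewrite hw.
by rewrite /wt big_distrl /=; apply: eq_bigr => i _; rewrite mulnA.
Qed.

Definition Pc (A : pred nat) n k := (\sum_(f : mults n | partk A k f) 1)%N.
Definition Nc (A : pred nat) n k := (\sum_(f : mults n | partk A k f) nparts f)%N.

Lemma p_i (A : pred nat) n (i : 'I_n) :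
  (\sum_(f | partk A n f) f i * nparts f =
   \sum_(1 <= j < n.+1) (if A i.+1 && (i.+1 * j <= n) then
        Nc A n (n - i.+1 * j) + j * Pc A n (n - i.+1 * j) else 0))%N.
Proof.
rewrite (eq_bigr (fun f : mults n => \sum_(1 <= j < n.+1) (if j <= f i then nparts f else 0)))%N;
  last by move=> f _; apply: mul_count; rewrite -ltnS ltn_ord.
rewrite exchange_big; apply: eq_big_nat => j /andP[hj1 hjn].
rewrite -big_mkcondr /=.
case: ifP => [/andP[hA hle] | hn].
  rewrite (eq_bigl (fun f : mults n => partk A n f && (j <= f i) && predT f)); last by move=> f; rewrite andbT.
  rewrite -(@shift A n i j (n - i.+1 * j) n predT) //; last by rewrite subnK.
  rewrite /Nc /Pc big_distrr /= -big_split /=.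
  apply: eq_big => g; first by rewrite andbT.
  move=> /andP[/andP[/eqP hw _] _]; rewrite muln1 (@np_upd n i (addj j i g) g j) //.
    by move=> x hx; rewrite addj_off.
  apply: addj_on.
  have := wt_ge g i; rewrite hw => h.
  have h1 : (g i <= n - i.+1 * j)%N by apply: leq_trans (leq_pmull _ _) h.
  apply: leq_trans (leq_add h1 (leq_pmull j (ltn0Sn i))) _.
  by rewrite subnK.
apply: big_pred0 => f; apply/negbTE/negP => /andP[/andP[/eqP hw hok] hle].
move/negP: hn; apply; apply/andP; split.
  by move/forallP: hok => /(_ i) /implyP; apply; apply: leq_trans hle.
by apply: (leq_trans _ (eq_leq hw)); apply: leq_trans (wt_ge f i); rewrite leq_mul2l hle orbT.
Qed.

Local Close Scope ring_scope.

Lemma divsum (R : Type) (idx : R) (op : Monoid.com_law idx) (A : pred nat) n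
  (G : nat -> nat -> R) :
  \big[op/idx]_(1 <= s < n.+1) \big[op/idx]_(1 <= a < s.+1 | A a && (a %| s)) G a s =
  \big[op/idx]_(1 <= a < n.+1) \big[op/idx]_(1 <= j < n.+1 | A a && (a * j <= n)) G a (a * j).
Proof.
transitivity (\big[op/idx]_(1 <= s < n.+1) \big[op/idx]_(1 <= a < n.+1 | A a && (a %| s)) G a s).
  apply: eq_big_nat => s /andP[hs1 hsn].
  rewrite [in RHS](@big_cat_nat _ _ _ s.+1) //=.
  rewrite [X in _ = op _ X]big_nat_cond [X in _ = op _ X]big1 ?Monoid.mulm1 //.
  move=> a /andP[/andP[ha _] /andP[_ hd]].
  by have := dvdn_leq hs1 hd; rewrite leqNgt ha.
rewrite (@exchange_big_dep_nat _ _ _ _ _ _ _ _ _ xpredT) //=.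
apply: eq_big_nat => a /andP[ha1 han].
case hA: (A a) => /=; last by rewrite !big_pred0.
rewrite -big_filter -[RHS]big_filter -(big_map (muln a) predT).
apply: perm_big; apply: uniq_perm.
- by apply: filter_uniq; apply: iota_uniq.
- rewrite map_inj_uniq; first by apply: filter_uniq; apply: iota_uniq.
  by move=> x y /eqP; rewrite eqn_pmul2l // => /eqP.
move=> s; rewrite mem_filter mem_index_iota; apply/idP/mapP.
  move=> /andP[hd /andP[hs1 hsn]]; exists (s %/ a).
    rewrite mem_filter mem_index_iota mulnC divnK // -ltnS hsn /=.
    rewrite divn_gt0 ?(dvdn_leq hs1 hd) //=.
    by apply: leq_ltn_trans (leq_div _ _) hsn.
  by rewrite mulnC divnK.
move=> [j]; rewrite mem_filter mem_index_iota => /andP[hj /andP[hj1 hjn]] ->.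
rewrite dvdn_mulr //= ltnS hj andbT muln_gt0 hj1 andbT.
by [].
Qed.

Local Close Scope ring_scope.

Lemma NpA_Nc (A : pred nat) n k : (k <= n)%N -> NpA A k = Nc A n k.
Proof.
move=> h; rewrite /NpA /Nc.
transitivity (\sum_(g : mults k | is_partA A g && (false ==> distb g)) id (nparts g))%N.
  by apply: eq_bigl => g; rewrite andbT.
by rewrite (@transfer A k n false id h); apply: eq_bigl => g; rewrite andbT.
Qed.

Lemma pA_Pc (A : pred nat) n k : (k <= n)%N -> pA A k = Pc A n k.
Proof.
move=> h; rewrite /pA /Pc -sum1dep_card.
transitivity (\sum_(g : mults k | is_partA A g && (false ==> distb g)) (fun _ => 1) (nparts g))%N.
  by apply: eq_bigl => g; rewrite andbT.
by rewrite (@transfer A k n false (fun _ => 1%N) h); apply: eq_bigl => g; rewrite andbT.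
Qed.

Lemma Nc0 (A : pred nat) n : Nc A n 0 = 0%N.
Proof.
apply: big1 => f /andP[/eqP hw _]; have := np_le_wt f; rewrite hw leqn0.
by move/eqP.
Qed.

Lemma shift_ord n (F : nat -> nat) : (\sum_(i < n) F i.+1 = \sum_(1 <= a < n.+1) F a)%N.
Proof. by rewrite big_add1 /= big_mkord. Qed.

Lemma p_main (A : pred nat) n (hn : (0 < n)%N) :
  (n * NpA A n =
     \sum_(1 <= k < n) NpA A k * sigmaA A (n - k)
   + \sum_(1 <= t < n.+1) t * tauA A t * pA A (n - t))%N.
Proof.
have -> : NpA A n = Nc A n n by [].
rewrite (@nN n (partk A n)); last by move=> f /andP[/eqP].
rewrite (eq_bigr (fun i : 'I_n => i.+1 * \sum_(1 <= j < n.+1) (if A i.+1 && (i.+1 * j <= n) then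
        Nc A n (n - i.+1 * j) + j * Pc A n (n - i.+1 * j) else 0)))%N;
  last by move=> i _; rewrite p_i.
rewrite (shift_ord n (fun a => a * \sum_(1 <= j < n.+1) (if A a && (a * j <= n) then
        Nc A n (n - a * j) + j * Pc A n (n - a * j) else 0)))%N.
rewrite (eq_big_nat _ _ (F1 := fun k => NpA A k * sigmaA A (n - k)) (F2 := fun k => Nc A n k * sigmaA A (n - k))%N); last first.
  by move=> k /andP[_ hk]; rewrite (@NpA_Nc A n k) // ltnW.
rewrite [X in _ = X + _]big_nat_rev /=.
rewrite (eq_big_nat _ _ (F1 := fun k => Nc A n (1 + n - k.+1) * sigmaA A (n - (1 + n - k.+1))) (F2 := fun s => Nc A n (n - s) * sigmaA A s)%N); last first.
  by move=> k /andP[_ hk]; rewrite subSS subKn // ltnW.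
have -> : (\sum_(1 <= s < n) Nc A n (n - s) * sigmaA A s =
           \sum_(1 <= s < n.+1) Nc A n (n - s) * sigmaA A s)%N.
  by rewrite big_nat_recr //= subnn Nc0 mul0n addn0.
rewrite /sigmaA.
rewrite [X in _ = X + _](eq_bigr (fun s => \sum_(1 <= a < s.+1 | A a && (a %| s)) Nc A n (n - s) * a))%N;
  last by move=> s _; rewrite big_distrr.
rewrite (divsum _ A n (fun a s => Nc A n (n - s) * a)%N).
rewrite (eq_big_nat _ _ (F1 := fun t => t * tauA A t * pA A (n - t)) (F2 := fun t => t * tauA A t * Pc A n (n - t))%N); last first.
  by move=> t _; rewrite (@pA_Pc A n) // leq_subr.
rewrite /tauA.
rewrite [X in _ = _ + X](eq_bigr (fun t => \sum_(1 <= a < t.+1 | A a && (a %| t)) t * 1 * Pc A n (n - t)))%N;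
  last by move=> t _; rewrite -big_distrl -big_distrr.
rewrite (divsum _ A n (fun a t => t * 1 * Pc A n (n - t))%N).
rewrite -big_split /=; apply: eq_bigr => a _.
rewrite -big_split /= big_distrr /= [in RHS]big_mkcond /=.
apply: eq_bigr => j _; case: ifP => _; last by rewrite muln0.
rewrite muln1 mulnDr mulnA; lia.
Qed.

Local Close Scope ring_scope.

Definition Qc (A : pred nat) n k := (\sum_(f : mults n | partk A k f && distb f) 1)%N.
Definition Mc (A : pred nat) n k := (\sum_(f : mults n | partk A k f && distb f) nparts f)%N.
Definition gg (A : pred nat) n (i : 'I_n) k :=
  (\sum_(f : mults n | (partk A k f && distb f) && (1 <= f i)) 1)%N.
Definition GG (A : pred nat) n (i : 'I_n) k :=
  (\sum_(f : mults n | (partk A k f && distb f) && (1 <= f i)) nparts f)%N.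
Definition hh (A : pred nat) n (i : 'I_n) k :=
  (\sum_(f : mults n | (partk A k f && distb f) && ~~ (1 <= f i)) 1)%N.
Definition HH (A : pred nat) n (i : 'I_n) k :=
  (\sum_(f : mults n | (partk A k f && distb f) && ~~ (1 <= f i)) nparts f)%N.

Lemma Qc_split A n (i : 'I_n) k : Qc A n k = (gg A i k + hh A i k)%N.
Proof. by rewrite /Qc (bigID (fun f : mults n => 1 <= f i)%N). Qed.
Lemma Mc_split A n (i : 'I_n) k : Mc A n k = (GG A i k + HH A i k)%N.
Proof. by rewrite /Mc (bigID (fun f : mults n => 1 <= f i)%N). Qed.

Lemma gg_small (A : pred nat) n (i : 'I_n) k : (k < i.+1)%N || ~~ A i.+1 -> gg A i k = 0%N /\ GG A i k = 0%N.
Proof.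
move=> h; suff H : forall f : mults n, (partk A k f && distb f) && (1 <= f i) = false.
  by split; apply: big_pred0.
move=> f; apply/negbTE/negP => /andP[/andP[/andP[/eqP hw hok] _] h1].
move/orP: h => [hk|hA].
  have := wt_ge f i; rewrite hw => h2.
  have : (i.+1 <= k)%N by apply: leq_trans h2; rewrite leq_pmulr.
  by rewrite leqNgt hk.
by move/forallP: hok => /(_ i) /implyP /(_ h1); move/negP: hA.
Qed.

Lemma distb_addj n (i : 'I_n) (g : mults n) : (g i + 1 <= n)%N ->
  distb (addj 1 i g) = ((g i : nat) == 0%N) && distb g.
Proof.
move=> hg; apply/forallP/andP.
  move=> H; have := H i; rewrite addj_on // => h0.
  have e0 : (g i : nat) = 0%N by lia.
  split; first by rewrite e0.
  apply/forallP => x; case: (eqVneq x i) => [->|hx]; first by rewrite e0.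
  by have := H x; rewrite addj_off.
move=> [/eqP h0 hd] x; case: (eqVneq x i) => [->|hx].
  by rewrite addj_on // h0.
by rewrite addj_off //; apply: (forallP hd).
Qed.

Lemma gg_shift (A : pred nat) n (i : 'I_n) k : A i.+1 -> (k + i.+1 <= n)%N ->
  gg A i (k + i.+1) = hh A i k /\ GG A i (k + i.+1) = (HH A i k + hh A i k)%N.
Proof.
move=> hA hkn.
have key : forall F : mults n -> nat,
  (\sum_(f : mults n | (partk A (k + i.+1) f && distb f) && (1 <= f i)) F f =
   \sum_(g : mults n | (partk A k g && distb g) && ~~ (1 <= g i)) F (addj 1 i g))%N.
  move=> F.
  rewrite (eq_bigl (fun f : mults n => partk A (k + i.+1) f && (1 <= f i) && distb f));
    last by move=> f; rewrite andbAC.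
  rewrite -(@shift A n i 1 k (k + i.+1) distb F) //; last by rewrite muln1.
  apply: eq_bigl => g; case hp: (partk A k g) => //=.
  move: hp => /andP[/eqP hw _].
  rewrite distb_addj; first by rewrite andbC -eqn0Ngt.
  have := wt_ge g i; rewrite hw => h.
  have h1 : (g i <= k)%N by apply: leq_trans (leq_pmull _ _) h.
  lia.
split; first by rewrite /gg /hh key.
rewrite /GG /HH /hh key -big_split /=; apply: eq_bigr => g /andP[/andP[hp _] _].
apply: (@np_upd n i); first by move=> x hx; rewrite addj_off.
apply: addj_on.
move: hp => /andP[/eqP hw _].
have := wt_ge g i; rewrite hw => h.
have h1 : (g i <= k)%N by apply: leq_trans (leq_pmull _ _) h.
lia.
Qed.

Local Open Scope ring_scope.

Definition S n (a : nat) (X : nat -> nat -> int) (m : nat) : int :=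
  \sum_(1 <= j < n.+1) (if (a * j <= m)%N then (-1) ^+ j.-1 * X j (m - a * j)%N else 0).

Lemma S_small n a X m : (m < a)%N -> S n a X m = 0.
Proof.
move=> hm; rewrite /S big_nat_cond big1 // => j /andP[/andP[hj _] _].
rewrite ifF //; apply/negbTE; rewrite -ltnNge; apply: (leq_trans hm); exact: leq_pmulr.
Qed.

Lemma S_add n a X Y m :
  S n a (fun j k => X j k + Y j k) m = S n a X m + S n a Y m.
Proof.
rewrite /S -big_split /=; apply: eq_bigr => j _; case: ifP => _; first by rewrite mulrDr.
by rewrite addr0.
Qed.

Lemma S_ext n a X Y m : (forall j k, X j k = Y j k) -> S n a X m = S n a Y m.
Proof. by move=> h; apply: eq_bigr => j _; rewrite h. Qed.

Lemma S_shift n a X k : (0 < a)%N -> (k + a <= n)%N ->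
  S n a X (k + a) = X 1%N k - S n a (fun j => X j.+1) k.
Proof.
move=> ha hkn; have hn : (1 <= n)%N by lia.
rewrite /S big_nat_recl // muln1 leq_addl expr0 mul1r addnK.
rewrite [X in _ = _ - X]big_nat_recr //= ifF; last first.
  apply/negbTE; rewrite -ltnNge; apply: (@leq_trans n); first by lia.
  by apply: leq_pmull.
rewrite addr0 -sumrN; congr (_ + _); apply: eq_big_nat => j /andP[hj _].
have -> : (a * j.+1 <= k + a)%N = (a * j <= k)%N by rewrite mulnS addnC leq_add2r.
case: ifP => _; last by rewrite oppr0.
rewrite mulnS [(a + _)%N]addnC subnDr.
by case: j hj => // j _ /=; rewrite exprS mulN1r mulNr.
Qed.

Lemma q_ind (A : pred nat) n (i : 'I_n) (hA : A i.+1) m : (m <= n)%N ->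
  (gg A i m)%:Z = S n i.+1 (fun _ k => (Qc A n k)%:Z) m /\
  (GG A i m)%:Z = S n i.+1 (fun _ k => (Mc A n k)%:Z) m
                 + S n i.+1 (fun j k => j%:Z * (Qc A n k)%:Z) m.
Proof.
elim/ltn_ind: m => m IH hm.
case: (ltnP m i.+1) => hma.
  have [-> ->] := @gg_small A n i m (introT orP (or_introl hma)).
  by rewrite !S_small // addr0.
set k := (m - i.+1)%N.
have hk : (k + i.+1)%N = m by rewrite subnK.
have hkm : (k < m)%N by lia.
have [IH1 IH2] := IH k hkm (leq_trans (ltnW hkm) hm).
rewrite -hk; rewrite -hk in hm.
have [e1 e2] := gg_shift hA hm.
have q1 := Qc_split A i k; have m1 := Mc_split A i k.
rewrite e1 e2 !S_shift //=.
have -> : S n i.+1 (fun j k0 => (j.+1)%:Z * (Qc A n k0)%:Z) k =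
          S n i.+1 (fun j k0 => j%:Z * (Qc A n k0)%:Z) k + S n i.+1 (fun _ k0 => (Qc A n k0)%:Z) k.
  rewrite -S_add; apply: S_ext => j k0.
  by rewrite -addn1 PoszD mulrDl mul1r.
split; lia.
Qed.

Local Close Scope ring_scope.

Lemma NqA_Mc (A : pred nat) n k : (k <= n)%N -> NqA A k = Mc A n k.
Proof.
move=> h; rewrite /NqA /Mc.
transitivity (\sum_(g : mults k | is_partA A g && (true ==> distb g)) id (nparts g))%N.
  by [].
by rewrite (@transfer A k n true id h).
Qed.

Lemma qA_Qc (A : pred nat) n k : (k <= n)%N -> qA A k = Qc A n k.
Proof.
move=> h; rewrite /qA /Qc -sum1dep_card.
transitivity (\sum_(g : mults k | is_partA A g && (true ==> distb g)) (fun _ => 1) (nparts g))%N.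
  by [].
by rewrite (@transfer A k n true (fun _ => 1%N) h).
Qed.

Lemma Mc0 (A : pred nat) n : Mc A n 0 = 0%N.
Proof.
apply: big1 => f /andP[/andP[/eqP hw _] _]; have := np_le_wt f; rewrite hw leqn0.
by move/eqP.
Qed.

Lemma GG_n (A : pred nat) n (i : 'I_n) :
  (\sum_(f | partk A n f && distb f) f i * nparts f = GG A i n)%N.
Proof.
rewrite (bigID (fun f : mults n => 1 <= f i)%N) /= [X in (_ + X)%N]big1 ?addn0.
  apply: eq_bigr => f /andP[/andP[_ hd] h1].
  have -> : (f i : nat) = 1%N by apply/eqP; rewrite eqn_leq h1 (forallP hd i).
  by rewrite mul1n.
by move=> f /andP[_]; rewrite -eqn0Ngt => /eqP ->.
Qed.

Local Open Scope ring_scope.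

Lemma Posz_sum (I : Type) (r : seq I) (P : pred I) (F : I -> nat) :
  (\sum_(i <- r | P i) F i)%N%:Z = \sum_(i <- r | P i) (F i)%:Z.
Proof. exact: (big_morph Posz PoszD). Qed.

Lemma shift_ordZ n (F : nat -> int) : \sum_(i < n) F i.+1 = \sum_(1 <= a < n.+1) F a.
Proof. by rewrite big_add1 /= big_mkord. Qed.

Lemma q_main (A : pred nat) n (hn : (0 < n)%N) :
  ((n * NqA A n)%:Z =
     \sum_(1 <= k < n) (NqA A k)%:Z * sigmasA A (n - k)
   + \sum_(1 <= t < n.+1) t%:Z * tausA A t * (qA A (n - t))%:Z)%R.
Proof.
have -> : NqA A n = Mc A n n by [].
rewrite (@nN n (fun f => partk A n f && distb f)); last by move=> f /andP[/andP[/eqP]].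
rewrite (eq_bigr (fun i : 'I_n => i.+1 * GG A i n)%N); last by move=> i _; rewrite GG_n.
rewrite Posz_sum.
rewrite (eq_bigr (fun i : 'I_n => (i.+1)%:Z * (if A i.+1 then
     S n i.+1 (fun _ k => (Mc A n k)%:Z) n + S n i.+1 (fun j k => j%:Z * (Qc A n k)%:Z) n
     else 0))); last first.
  move=> i _; rewrite PoszM; case: ifP => hA.
    by have [_ ->] := q_ind hA (leqnn n).
  by have [_ ->] := @gg_small A n i n (introT orP (or_intror (negbT hA))).
rewrite (shift_ordZ n (fun a => a%:Z * (if A a then
     S n a (fun _ k => (Mc A n k)%:Z) n + S n a (fun j k => j%:Z * (Qc A n k)%:Z) n
     else 0))).
rewrite (eq_big_nat _ _ (F1 := fun k => (NqA A k)%:Z * sigmasA A (n - k))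
   (F2 := fun k => (Mc A n k)%:Z * sigmasA A (n - k))); last first.
  by move=> k /andP[_ hk]; rewrite (@NqA_Mc A n k) // ltnW.
rewrite [X in _ = X + _]big_nat_rev /=.
rewrite (eq_big_nat _ _ (F1 := fun k => (Mc A n (1 + n - k.+1))%:Z * sigmasA A (n - (1 + n - k.+1)))
   (F2 := fun s => (Mc A n (n - s))%:Z * sigmasA A s)); last first.
  by move=> k /andP[_ hk]; rewrite subSS subKn // ltnW.
have -> : \sum_(1 <= s < n) (Mc A n (n - s))%:Z * sigmasA A s =
          \sum_(1 <= s < n.+1) (Mc A n (n - s))%:Z * sigmasA A s.
  by rewrite big_nat_recr //= subnn Mc0 mul0r addr0.
rewrite /sigmasA.
rewrite [X in _ = X + _](eq_bigr (fun s => \sum_(1 <= a < s.+1 | A a && (a %| s)%N)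
     (Mc A n (n - s))%:Z * ((-1) ^+ (s %/ a)%N.-1 * a%:Z))); last by move=> s _; rewrite mulr_sumr.
rewrite (divsum _ A n (fun a s => (Mc A n (n - s))%:Z * ((-1) ^+ (s %/ a)%N.-1 * a%:Z))).
rewrite (eq_big_nat _ _ (F1 := fun t => t%:Z * tausA A t * (qA A (n - t))%:Z)
   (F2 := fun t => t%:Z * tausA A t * (Qc A n (n - t))%:Z)); last first.
  by move=> t _; rewrite (@qA_Qc A n) // leq_subr.
rewrite /tausA.
rewrite [X in _ = _ + X](eq_bigr (fun t => \sum_(1 <= a < t.+1 | A a && (a %| t)%N)
     t%:Z * (-1) ^+ (t %/ a)%N.-1 * (Qc A n (n - t))%:Z)); last first.
  by move=> t _; rewrite -mulr_suml -mulr_sumr.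
rewrite (divsum _ A n (fun a t => t%:Z * (-1) ^+ (t %/ a)%N.-1 * (Qc A n (n - t))%:Z)).
rewrite -big_split /=; apply: eq_big_nat => a /andP[ha1 han].
case hA: (A a) => /=; last by rewrite mulr0 !big_pred0_eq addr0.
rewrite -[in RHS]big_split /= [in RHS]big_mkcond /= /S mulrDr !mulr_sumr -big_split /=.
apply: eq_bigr => j _; case: ifP => _; last by rewrite !mulr0 addr0.
rewrite mulKn // PoszM; ring.
Qed.

Local Close Scope ring_scope.
Unset Implicit Arguments.
Theorem theorem4 (A : pred nat) (n : nat)
  (hApos : forall a, A a -> (0 < a)%N) (hAne : exists a, A a) (hn : (0 < n)%N) :
  (n * NpA A n =
     \sum_(1 <= k < n) NpA A k * sigmaA A (n - k)
   + \sum_(1 <= t < n.+1) t * tauA A t * pA A (n - t))%N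
  /\
  ((n * NqA A n)%:Z =
     \sum_(1 <= k < n) (NqA A k)%:Z * sigmasA A (n - k)
   + \sum_(1 <= t < n.+1) t%:Z * tausA A t * (qA A (n - t))%:Z)%R.
Proof.
split; first exact: p_main.
exact: q_main.
Qed.
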